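(* Let $\mathcal{A}$ be a unital algebra over a field $F$ with $\operatorname{char}(F)\neq2$, having an idempotent $e\neq0,1$, and write $e^{\perp}=1-e$. Assume that for every $x\in\mathcal{A}$: if $exe\cdot e\mathcal{A}e^{\perp}=\{0\}=e^{\perp}\mathcal{A}e\cdot exe$ then $exe=0$, and if $e\mathcal{A}e^{\perp}\cdot e^{\perp}xe^{\perp}=\{0\}=e^{\perp}xe^{\perp}\cdot e^{\perp}\mathcal{A}e$ then $e^{\perp}xe^{\perp}=0$. Then $\operatorname{QJDer}(\mathcal{A})=\operatorname{Cent}(\mathcal{A})+\operatorname{JDer}(\mathcal{A})$.
   Context: $x\circ y=xy+yx$. $\operatorname{QJDer}(\mathcal{A})$: linear $f:\mathcal{A}\to\mathcal{A}$ for which there is a linear $h$ with $f(x)\circ y+x\circ f(y)=h(x\circ y)$ for all $x,y$. $\operatorname{Cent}(\mathcal{A})$: linear $f$ with $f(xy)=f(x)y=xf(y)$. $\operatorname{JDer}(\mathcal{A})$: linear $d$ with $d(x\circ y)=d(x)\circ y+x\circ d(y)$. Sums of sets of maps are sets of pointwise sums. *)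

(* Defs.v *)
From HB Require Import structures.
From mathcomp Require Import all_boot all_order all_algebra.
Set Implicit Arguments. Unset Strict Implicit. Unset Printing Implicit Defensive.
Import GRing.Theory.
Local Open Scope ring_scope.

Section Defs.
Variables (F : fieldType) (A : algType F).

Definition is_linear (f : A -> A) : Prop :=
  forall (a : F) (x y : A), f (a *: x + y) = a *: f x + f y.

Definition jprod (x y : A) : A := x * y + y * x.

Definition QJDer (f : A -> A) : Prop :=
  is_linear f /\
  exists h : A -> A, is_linear h /\
    forall x y, jprod (f x) y + jprod x (f y) = h (jprod x y).

Definition Cent (f : A -> A) : Prop :=
  is_linear f /\ forall x y, f (x * y) = f x * y /\ f (x * y) = x * f y.

Definition JDer (d : A -> A) : Prop :=
  is_linear d /\ forall x y, d (jprod x y) = jprod (d x) y + jprod x (d y).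
End Defs.

(* Main.v *)
Require Import Defs.
From HB Require Import structures.
From mathcomp Require Import all_boot all_order all_algebra.
Import GRing.Theory.
Local Open Scope ring_scope.

Lemma two_cancel (F : fieldType) (A : algType F) :
  (2%:R : F) != 0 -> forall u v : A, u *+ 2 = v *+ 2 -> u = v.
Proof.
move=> h2 u v E.
have : (2%:R : F)^-1 *: ((2%:R : F) *: u) = (2%:R : F)^-1 *: ((2%:R : F) *: v).
  by rewrite !scaler_nat E.
by rewrite !scalerA mulVf // !scale1r.
Qed.

Lemma linD (F : fieldType) (A : algType F) (f : A -> A) :
  is_linear f -> forall x y, f (x + y) = f x + f y.
Proof. by move=> fl x y; rewrite -{1}(scale1r x) fl scale1r. Qed.

Lemma lin2 (F : fieldType) (A : algType F) (f : A -> A) :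
  is_linear f -> forall x, f (x *+ 2) = f x *+ 2.
Proof. by move=> fl x; rewrite !mulr2n (@linD _ _ _ fl). Qed.

Lemma key1 (F : fieldType) (A : algType F) (f : A -> A) (z : A) :
  (forall u v : A, u *+ 2 = v *+ 2 -> u = v) -> is_linear f ->
  (forall x y, (jprod (f x) y + jprod x (f y)) *+ 2 =
     z * jprod x y + jprod x y * z + f (jprod x y) *+ 2) ->
  forall p, p * p = p ->
  p * z * (1 - p) = 0 /\ p * f p * p = p * z * p /\ (1 - p) * f p * (1 - p) = 0.
Proof.
move=> two fl Hrel p pp.
have E := Hrel p p.
rewrite /jprod pp -mulr2n (@lin2 _ _ _ fl) in E.
set a := f p in E *.
set q := 1 - p.
have pq : p * q = 0 by rewrite /q mulrBr mulr1 pp subrr.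
have qp : q * p = 0 by rewrite /q mulrBl mul1r pp subrr.
have qq : q * q = q by rewrite /q mulrBr mulr1 qp subr0.
have H1 : forall x, x * p * q = 0 by move=> x; rewrite -mulrA pq mulr0.
have H2 : forall x, x * q * p = 0 by move=> x; rewrite -mulrA qp mulr0.
have H3 : forall x, x * p * p = x * p by move=> x; rewrite -mulrA pp.
have H4 : forall x, x * q * q = x * q by move=> x; rewrite -mulrA qq.
have H5 : 1 - p = q by [].
clearbody q a.
have E1 := congr1 (fun w => p * w * q) E.
have E2 := congr1 (fun w => p * w * p) E.
have E3 := congr1 (fun w => q * w * q) E.
move: E1 E2 E3 => /=.
rewrite ?H5  !(mulrnAr, mulrnAl, mulrDr, mulrDl, mulrA, pp, qq, pq, qp, H1, H2, H3, H4, mulr0, mul0r, mul0rn, addr0, add0r).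
rewrite -!mulr2n => E1 E2 E3.
split; last split.
- apply: (two); rewrite mul0rn; move/eqP: E1; rewrite -subr_eq subrr eq_sym => /eqP //.
- apply: (two); apply: (two); move/eqP: E2; rewrite [X in X == _]mulr2n -subr_eq addrK => /eqP //.
- by apply: (two); apply: (two); rewrite !mul0rn.
Qed.

Lemma comm_of (A : pzRingType) (z p : A) : p * p = p ->
  p * z * (1 - p) = 0 -> (1 - p) * z * p = 0 -> z * p = p * z.
Proof.
move=> pp h1 h2.
have e1 : p * z = p * z * p by move: h1; rewrite mulrBr mulr1 => /eqP; rewrite subr_eq0 => /eqP.
have e2 : z * p = p * z * p by move: h2; rewrite !mulrBl mul1r => /eqP; rewrite subr_eq0 => /eqP.
by rewrite e1 e2.
Qed.

Lemma key2 (F : fieldType) (A : algType F) (f : A -> A) (z : A) :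
  (forall u v : A, u *+ 2 = v *+ 2 -> u = v) -> is_linear f ->
  (forall x y, (jprod (f x) y + jprod x (f y)) *+ 2 =
     z * jprod x y + jprod x y * z + f (jprod x y) *+ 2) ->
  forall p, p * p = p -> z * p = p * z ->
  p * f p * p = p * z * p -> (1 - p) * f p * (1 - p) = 0 ->
  forall u, z * (p * u * (1 - p)) = (p * u * (1 - p)) * z.
Proof.
move=> two fl Hrel p pp zp hpap hqaq u.
set q := 1 - p in hqaq *.
have pq : p * q = 0 by rewrite /q mulrBr mulr1 pp subrr.
have qp : q * p = 0 by rewrite /q mulrBl mul1r pp subrr.
have qq : q * q = q by rewrite /q mulrBr mulr1 qp subr0.
have zq : z * q = q * z by rewrite /q mulrBr mulrBl mulr1 mul1r zp.
set m := p * u * q.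
have pm : p * m = m by rewrite /m !mulrA pp.
have mq : m * q = m by rewrite /m -!mulrA qq.
have mp : m * p = 0 by rewrite /m -!mulrA qp !mulr0.
have qm : q * m = 0 by rewrite /m !mulrA qp !mul0r.
have E := Hrel p m.
have jpm : jprod p m = m by rewrite /jprod pm mp addr0.
rewrite jpm /jprod in E.
set a := f p in E hpap hqaq.
set b := f m in E.
have H1 : forall x, x * m * q = x * m by move=> x; rewrite -mulrA mq.
have H2 : forall x, x * m * p = 0 by move=> x; rewrite -mulrA mp mulr0.
have H3 : m * a * q = 0.
  have -> : m * a * q = m * (q * a * q) by rewrite !mulrA mq.
  by rewrite hqaq mulr0.
have H4 : p * a * m = p * z * m by rewrite -pm !mulrA hpap.
have H5 : forall x, x * p * q = 0 by move=> x; rewrite -mulrA pq mulr0.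
have H6 : z * m = p * z * m by rewrite -{1}pm mulrA zp.
have H7 : m * z = m * z * q by rewrite -{1}mq -mulrA -zq mulrA.
clearbody m. clearbody q.
have E1 := congr1 (fun w => p * w * q) E.
move: E1 => /=.
rewrite !(mulrnAr, mulrnAl, mulrDr, mulrDl, mulrA, pp, pm, qq, pq, qp, H1, H2, H3, H4, H5, mulr0, mul0r, mul0rn, addr0, add0r).
rewrite mulrnDl => /addIr; rewrite mulr2n => /addrI h.
by rewrite H6 h -H7.
Qed.

Lemma piece (A : pzRingType) (z p : A) : p * p = p -> z * p = p * z ->
  (forall u, z * (p * u * (1 - p)) = (p * u * (1 - p)) * z) ->
  (forall u, z * ((1 - p) * u * p) = ((1 - p) * u * p) * z) ->
  (forall x, (forall a, (p * x * p) * (p * a * (1 - p)) = 0) ->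
             (forall a, ((1 - p) * a * p) * (p * x * p) = 0) -> p * x * p = 0) ->
  forall x, z * (p * x * p) = (p * x * p) * z.
Proof.
move=> pp zp H12 H21 Hyp x.
have tm : forall w, (p * x * p) * (p * w * (1 - p)) = p * (x * p * p * w) * (1 - p).
  by move=> w; rewrite !mulrA.
have nt : forall w, ((1 - p) * w * p) * (p * x * p) = (1 - p) * (w * p * p * x) * p.
  by move=> w; rewrite !mulrA.
set t := p * x * p in tm nt *.
have pt : p * t = t by rewrite /t !mulrA pp.
have tp : t * p = t by rewrite /t -!mulrA pp.
clearbody t.
set c := z * t - t * z.
have e1 : p * (z * t) * p = z * t by rewrite !mulrA -zp -!mulrA tp pt.
have e2 : p * (t * z) * p = t * z by rewrite !mulrA pt -mulrA zp mulrA tp.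
have ce : p * c * p = c by rewrite /c mulrBr mulrBl e1 e2.
apply/eqP; rewrite -subr_eq0; apply/eqP; rewrite -/c -ce; apply: Hyp => a; rewrite ce.
  have k1 : z * t * (p * a * (1 - p)) = (t * (p * a * (1 - p))) * z.
    by rewrite -mulrA tm H12 -tm.
  have k2 : t * z * (p * a * (1 - p)) = (t * (p * a * (1 - p))) * z.
    by rewrite -mulrA H12 mulrA.
  by rewrite /c mulrBl k1 k2 subrr.
have k3 : ((1 - p) * a * p) * (z * t) = z * (((1 - p) * a * p) * t).
  by rewrite mulrA -H21 -[z * _ * t]mulrA.
have k4 : ((1 - p) * a * p) * (t * z) = z * (((1 - p) * a * p) * t).
  by rewrite mulrA nt H21.
by rewrite /c mulrBr k3 k4 subrr.
Qed.

Arguments key1 {F A f z}.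
Arguments key2 {F A f z}.
Arguments piece {A z p}.
Arguments comm_of {A z p}.

Lemma jprodDl (F : fieldType) (A : algType F) (u v y : A) :
  jprod (u + v) y = jprod u y + jprod v y.
Proof. by rewrite /jprod mulrDl mulrDr addrACA. Qed.
Lemma jprodDr (F : fieldType) (A : algType F) (u v y : A) :
  jprod y (u + v) = jprod y u + jprod y v.
Proof. by rewrite /jprod mulrDl mulrDr addrACA. Qed.
Lemma jprodBl (F : fieldType) (A : algType F) (u v y : A) :
  jprod (u - v) y = jprod u y - jprod v y.
Proof. by rewrite /jprod mulrBl mulrBr opprD addrACA. Qed.
Lemma jprodBr (F : fieldType) (A : algType F) (u v y : A) :
  jprod y (u - v) = jprod y u - jprod y v.
Proof. by rewrite /jprod mulrBl mulrBr opprD addrACA. Qed.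

Theorem proposition4p4 (F : fieldType) (A : algType F) (e : A) :
  ~~ (2 \in [pchar F]) ->
  e * e = e -> e != 0 -> e != 1 ->
  (forall x : A,
     (forall a : A, (e * x * e) * (e * a * (1 - e)) = 0) ->
     (forall a : A, ((1 - e) * a * e) * (e * x * e) = 0) ->
     e * x * e = 0) ->
  (forall x : A,
     (forall a : A, (e * a * (1 - e)) * ((1 - e) * x * (1 - e)) = 0) ->
     (forall a : A, ((1 - e) * x * (1 - e)) * ((1 - e) * a * e) = 0) ->
     (1 - e) * x * (1 - e) = 0) ->
  forall f : A -> A,
    QJDer f <-> exists c d : A -> A, Cent c /\ JDer d /\ forall x, f x = c x + d x.
Proof.
move=> h2 ee _ _ Hyp1 Hyp2 f; split.
- case=> fl [h [hl Hh]].
  have two2 : (2%:R : F) != 0.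
    by apply/negP => H; move/negP: h2; apply; rewrite inE /= H.
  have two := @two_cancel F A two2.
  set z := f 1.
  have hw : forall w, h w *+ 2 = z * w + w * z + f w *+ 2.
    move=> w; have := Hh 1 w.
    by rewrite /jprod !mul1r !mulr1 -!mulr2n (@lin2 _ _ _ hl) => <-.
  have Hrel : forall x y, (jprod (f x) y + jprod x (f y)) *+ 2 =
     z * jprod x y + jprod x y * z + f (jprod x y) *+ 2.
    by move=> x y; rewrite Hh hw.
  have qq : (1 - e) * (1 - e) = 1 - e.
    by rewrite mulrBr mulr1 mulrBl mul1r ee subrr subr0.
  have [k1a [k1b k1c]] := key1 two fl Hrel e ee.
  have [k2a [k2b k2c]] := key1 two fl Hrel (1 - e) qq.
  rewrite subKr in k2a.
  have zc := comm_of ee k1a k2a.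
  have zq : z * (1 - e) = (1 - e) * z by rewrite mulrBr mulrBl mulr1 mul1r zc.
  have c12 := key2 two fl Hrel e ee zc k1b k1c.
  have c21 := key2 two fl Hrel (1 - e) qq zq k2b k2c.
  rewrite subKr in c21.
  have c11 := piece ee zc c12 c21 Hyp1.
  have := @piece A z (1 - e) qq zq; rewrite subKr => /(_ c21 c12) c22.
  have {}c22 : forall x, z * ((1 - e) * x * (1 - e)) = ((1 - e) * x * (1 - e)) * z.
    by apply: c22 => x H1 H2; apply: Hyp2.
  have central : forall x, z * x = x * z.
    move=> x.
    have -> : x = e * x * e + e * x * (1 - e) + ((1 - e) * x * e + (1 - e) * x * (1 - e)).
      by rewrite -!mulrDr -!mulrA -!mulrDl addrC subrK mul1r mulr1.
    move: (c11 x) (c12 x) (c21 x) (c22 x).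
    move: (e * x * e) (e * x * (1 - e)) ((1 - e) * x * e) ((1 - e) * x * (1 - e)) => a b c d ha hb hc hd.
    by rewrite !mulrDr !mulrDl ha hb hc hd.
  have cm : forall u v, u * (z * v) = z * (u * v) by move=> u v; rewrite mulrA -central mulrA.
  exists (fun x => z * x), (fun x => f x - z * x); split; last split.
  + split; first by move=> a x y; rewrite mulrDr scalerAr.
    by move=> x y; rewrite mulrA; split=> //; rewrite cm mulrA.
  + split.
      by move=> a x y; rewrite fl mulrDr -scalerAr scalerBr opprD addrACA.
    move=> x y; apply: two.
    have J : jprod (z * x) y + jprod x (z * y) = (z * jprod x y) *+ 2.
      by rewrite /jprod mulr2n mulrDr !cm !mulrA.
    rewrite jprodBl jprodBr addrACA -opprD mulrnBl.
    rewrite [RHS]mulrnBl Hrel J -(central (jprod x y)) -mulr2n.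
    move: (z * jprod x y *+ 2) (f (jprod x y) *+ 2) => X Y.
    by rewrite mulr2n opprD addrA [X + Y - X]addrAC subrr add0r.
  + by move=> x; rewrite addrC subrK.
- case=> c [d [[cl cc] [[dl dd] fcd]]].
  have c1 : forall x y, c x * y = c (x * y) by move=> x y; case: (cc x y).
  have c2 : forall x y, x * c y = c (x * y) by move=> x y; case: (cc x y).
  split.
    by move=> a x y; rewrite !fcd cl dl scalerDr addrACA.
  exists (fun x => c x *+ 2 + d x); split.
    by move=> a x y; rewrite cl dl mulrnDl scalerDr -scalerMnr addrACA.
  move=> x y; rewrite !fcd dd jprodDl jprodDr addrACA.
  congr (_ + _).
  by rewrite /jprod !c1 !c2 -(@linD _ _ _ cl) mulr2n.
Qed.
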